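(* There exists a function $I(y,y')$, smooth on $\{(y,y'):0<y'<y\}$, such that $$G_{L}(y,y')=\mathbf{1}_{(0,\infty)}(y-y')\frac{Q(y)}{Q(y')}I(y,y'),\qquad G_{iL}(y,y')=\mathbf{1}_{(0,\infty)}(y-y')\frac{Q(y)}{Q(y')}$$ are the outgoing Green's functions of $L_Q$ and of $i^{-1}L_Qi$ respectively (acting on real-valued functions), i.e. $L_Q(G_L(\cdot,y'))=\delta_{y'}$, $i^{-1}L_Qi(G_{iL}(\cdot,y'))=\delta_{y'}$, and both vanish for $0<y<y'$; and $I$ has the following properties. (1) For every integer $k\ge0$ and $0<y'<y$: $|I(y,y')|\lesssim 1+\langle y'\rangle^{-2}\log\big(2+\frac{\langle y\rangle}{\langle y'\rangle}\big)$; $|y\partial_yI(y,y')|\lesssim \frac{y-y'}{y}\min\{\frac{y^2}{\langle y\rangle^2},\langle y'\rangle^{-2}\}$; for $k\ge2$, $|(y\partial_y)^kI(y,y')|\lesssim_k\frac{y^2}{1+y^4}\big(1+\langle y'\rangle^{-2}\log\big(2+\frac{\langle y\rangle}{\langle y'\rangle}\big)\big)$. (2) $\lim_{y-y'\to0^+}I(y,y')=1$ and $\lim_{y-y'\to0^+}y\partial_yI(y,y')=0$. Moreover, setting $I^{(k)}(y)=\lim_{y'\to y^-}(y\partial_y)^kI(y,y')$, for all $k\ge2$ and $\ell\ge0$ one has $|I^{(k)}(y)|_\ell\lesssim_{k,\ell}\frac{y^2}{1+y^4}$.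
   Context: $Q(y)=\frac{\sqrt8}{1+y^2}$, $A_\theta[Q](y)=-\frac{2y^2}{1+y^2}$, $\langle a\rangle=(1+a^2)^{1/2}$. For real-valued $u$ on $(0,\infty)$: $L_Qu=\partial_yu-\frac{A_\theta[Q]}{y}u+\frac{Q}{y}\int_0^yQu\,y'dy'$ and $i^{-1}L_Q(iu)=\partial_yu-\frac{A_\theta[Q]}{y}u$. The outgoing Green's function of a linear operator $T$ acting on real functions of $y\in(0,\infty)$ is $G(y,y')$ with $T(G(\cdot,y'))=\delta_{y'}$ and $G(y,y')=0$ for $0<y<y'$. For a function $f$ and integer $\ell\ge0$, $|f|_\ell(y)=\sup_{0\le j\le\ell}|y^j\partial_y^jf(y)|$. *)

(* Defs.v *)
From Stdlib Require Import Reals.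
From Coquelicot Require Import Coquelicot.
Open Scope R_scope.

Definition Q (y : R) : R := sqrt 8 / (1 + y ^ 2).
Definition Atheta (y : R) : R := - (2 * y ^ 2) / (1 + y ^ 2).
Definition jb (a : R) : R := sqrt (1 + a ^ 2).

Definition smooth1 (phi : R -> R) : Prop := forall (n : nat) (x : R), ex_derive_n phi n x.
Definition supported_in (phi : R -> R) (a b : R) : Prop :=
  forall y, y < a \/ b < y -> phi y = 0.

(* Distributional identity  L_Q u = delta_{y0}  on (0,oo):
   for every test function phi supported in [a,b] (0<a<b),
   <L_Q u, phi> = int u (-phi' - (A/y) phi) dy + int (Q/y) phi(y) (int_0^y Q u s ds) dy
               = phi(y0). *)
Definition LQ_eq_delta (u : R -> R) (y0 : R) : Prop :=
  forall (phi : R -> R) (a b : R), 0 < a -> a < b -> smooth1 phi -> supported_in phi a b ->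
    (forall y, 0 <= y <= b -> ex_RInt (fun s => Q s * u s * s) 0 y) /\
    ex_RInt (fun y => u y * (- Derive phi y - Atheta y / y * phi y)
                      + Q y / y * phi y * RInt (fun s => Q s * u s * s) 0 y) a b /\
    RInt (fun y => u y * (- Derive phi y - Atheta y / y * phi y)
                   + Q y / y * phi y * RInt (fun s => Q s * u s * s) 0 y) a b = phi y0.

(* Distributional identity  i^{-1} L_Q (i u) = (d/dy - A/y) u = delta_{y0}  on (0,oo). *)
Definition iLQ_eq_delta (u : R -> R) (y0 : R) : Prop :=
  forall (phi : R -> R) (a b : R), 0 < a -> a < b -> smooth1 phi -> supported_in phi a b ->
    ex_RInt (fun y => u y * (- Derive phi y - Atheta y / y * phi y)) a b /\
    RInt (fun y => u y * (- Derive phi y - Atheta y / y * phi y)) a b = phi y0.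

Definition outgoing_Green_LQ (G : R -> R -> R) : Prop :=
  forall y', 0 < y' -> LQ_eq_delta (fun y => G y y') y' /\ (forall y, 0 < y < y' -> G y y' = 0).
Definition outgoing_Green_iLQ (G : R -> R -> R) : Prop :=
  forall y', 0 < y' -> iLQ_eq_delta (fun y => G y y') y' /\ (forall y, 0 < y < y' -> G y y' = 0).

Definition ind_pos (t : R) : R := if Rlt_dec 0 t then 1 else 0.

Definition G_L (I : R -> R -> R) (y y' : R) : R := ind_pos (y - y') * (Q y / Q y') * I y y'.
Definition G_iL (y y' : R) : R := ind_pos (y - y') * (Q y / Q y').

Fixpoint Ck_on (k : nat) (U : R -> R -> Prop) (f : R -> R -> R) : Prop :=
  (forall x y, U x y -> continuous (fun p : R * R => f (fst p) (snd p)) (x, y)) /\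
  match k with
  | O => True
  | S k' =>
      (forall x y, U x y -> ex_derive (fun t => f t y) x /\ ex_derive (fun t => f x t) y) /\
      Ck_on k' U (fun x y => Derive (fun t => f t y) x) /\
      Ck_on k' U (fun x y => Derive (fun t => f x t) y)
  end.
Definition smooth_on (U : R -> R -> Prop) (f : R -> R -> R) : Prop := forall k, Ck_on k U f.

Definition yDy (f : R -> R -> R) : R -> R -> R := fun y y' => y * Derive (fun t => f t y') y.
Definition yDy_iter (k : nat) (f : R -> R -> R) : R -> R -> R := Nat.iter k yDy f.

Definition wlog (y y' : R) : R := 1 + / (jb y') ^ 2 * ln (2 + jb y / jb y').

(* Main.v *)
Require Import Defs.
From Stdlib Require Import Reals.
From Coquelicot Require Import Coquelicot.
Open Scope R_scope.
From Stdlib Require Import Lra Lia Psatz List.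

Definition U0 (x y : R) := 0 < x /\ 0 < y.

Inductive nice : (R -> R -> R) -> Prop :=
| nc c : nice (fun _ _ => c)
| nx : nice (fun x _ => x)
| ny : nice (fun _ y => y)
| nlx : nice (fun x _ => ln x)
| nly : nice (fun _ y => ln y)
| nix : nice (fun x _ => / x)
| niy : nice (fun _ y => / y)
| nax : nice (fun x _ => / (1 + x^2))
| nay : nice (fun _ y => / (1 + y^2))
| nplus f g : nice f -> nice g -> nice (fun x y => f x y + g x y)
| nmult f g : nice f -> nice g -> nice (fun x y => f x y * g x y)
| next f g : nice f -> (forall x y, U0 x y -> f x y = g x y) -> nice g.

Lemma loc_pos (x : R) : 0 < x -> locally x (fun t => 0 < t).
Proof.
  intros Hx. exists (mkposreal x Hx). intros t Ht.
  change (Rabs (t - x) < x) in Ht. apply Rabs_def2 in Ht. simpl in Ht. lra.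
Qed.

Lemma loc_U0 (x y : R) : U0 x y -> locally (x, y) (fun p : R * R => U0 (fst p) (snd p)).
Proof.
  intros [Hx Hy]. assert (H : 0 < Rmin x y) by (apply Rmin_glb_lt; lra).
  exists (mkposreal _ H). intros [a b] [Ha Hb].
  change (Rabs (a - x) < Rmin x y) in Ha. change (Rabs (b - y) < Rmin x y) in Hb.
  apply Rabs_def2 in Ha. apply Rabs_def2 in Hb.
  pose proof (Rmin_l x y). pose proof (Rmin_r x y). split; simpl; lra.
Qed.

Lemma cont_x (g : R -> R) x y : continuous g x -> continuous (fun p : R * R => g (fst p)) (x, y).
Proof. intros H. apply (continuous_comp fst g (x,y)); [apply continuous_fst | exact H]. Qed.
Lemma cont_y (g : R -> R) x y : continuous g y -> continuous (fun p : R * R => g (snd p)) (x, y).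
Proof. intros H. apply (continuous_comp snd g (x,y)); [apply continuous_snd | exact H]. Qed.

Lemma pos1 (y : R) : 0 < 1 + y^2.
Proof. nra. Qed.

Lemma nice_cont f : nice f -> forall x y, U0 x y -> continuous (fun p : R * R => f (fst p) (snd p)) (x, y).
Proof.
  induction 1; intros x y [Hx Hy].
  - apply continuous_const.
  - apply continuous_fst.
  - apply continuous_snd.
  - exact (cont_x ln x y (ex_derive_continuous ln x ltac:(auto_derive; lra))).
  - exact (cont_y ln x y (ex_derive_continuous ln y ltac:(auto_derive; lra))).
  - exact (cont_x Rinv x y (ex_derive_continuous Rinv x ltac:(auto_derive; lra))).
  - exact (cont_y Rinv x y (ex_derive_continuous Rinv y ltac:(auto_derive; lra))).
  - exact (cont_x (fun x => / (1 + x^2)) x y (ex_derive_continuous (fun x => / (1 + x^2)) x ltac:(auto_derive; pose proof (pos1 x); nra))).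
  - exact (cont_y (fun x => / (1 + x^2)) x y (ex_derive_continuous (fun x => / (1 + x^2)) y ltac:(auto_derive; pose proof (pos1 y); nra))).
  - apply (continuous_plus (fun p : R * R => f (fst p) (snd p)) (fun p : R * R => g (fst p) (snd p))).
    + apply IHnice1; split; auto.
    + apply IHnice2; split; auto.
  - apply (continuous_mult (fun p : R * R => f (fst p) (snd p)) (fun p : R * R => g (fst p) (snd p))).
    + apply IHnice1; split; auto.
    + apply IHnice2; split; auto.
  - apply (continuous_ext_loc _ (fun p : R * R => f (fst p) (snd p))).
    + assert (HU : U0 x y) by (split; auto).
      destruct (loc_U0 x y HU) as [e He]. exists e. intros p Hp. specialize (He p Hp).
      destruct p as [a b]. simpl in *. apply H0. exact He.
    + apply IHnice; split; auto.
Qed.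

Definition DerP (f : R -> R -> R) : Prop :=
  (forall x y, U0 x y -> ex_derive (fun t => f t y) x /\ ex_derive (fun t => f x t) y) /\
  nice (fun x y => Derive (fun t => f t y) x) /\ nice (fun x y => Derive (fun t => f x t) y).

Lemma atom_x (g g' : R -> R) : (forall x, 0 < x -> is_derive g x (g' x)) -> nice (fun x _ => g' x) ->
  DerP (fun x _ => g x).
Proof.
  intros Hd Hn. split; [|split].
  - intros x y [Hx Hy]. split; [exists (g' x); apply Hd; auto | apply ex_derive_const].
  - apply (next _ _ Hn). intros x y [Hx Hy]. symmetry. apply is_derive_unique. apply Hd; auto.
  - apply (next _ _ (nc 0)). intros x y _. symmetry. apply Derive_const.
Qed.

Lemma atom_y (g g' : R -> R) : (forall x, 0 < x -> is_derive g x (g' x)) -> nice (fun _ y => g' y) ->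
  DerP (fun _ y => g y).
Proof.
  intros Hd Hn. split; [|split].
  - intros x y [Hx Hy]. split; [apply ex_derive_const | exists (g' y); apply Hd; auto].
  - apply (next _ _ (nc 0)). intros x y _. symmetry. apply Derive_const.
  - apply (next _ _ Hn). intros x y [Hx Hy]. symmetry. apply is_derive_unique. apply Hd; auto.
Qed.

Lemma nice_der f : nice f -> DerP f.
Proof.
  induction 1.
  - split; [|split].
    + intros; split; apply ex_derive_const.
    + apply (next _ _ (nc 0)). intros x y _. symmetry. apply Derive_const.
    + apply (next _ _ (nc 0)). intros x y _. symmetry. apply Derive_const.
  - apply (atom_x (fun x => x) (fun _ => 1)); [intros; auto_derive; auto | apply nc].
  - apply (atom_y (fun x => x) (fun _ => 1)); [intros; auto_derive; auto | apply nc].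
  - apply (atom_x ln (fun x => / x)); [intros; auto_derive; [lra | field; lra] | apply nix].
  - apply (atom_y ln (fun x => / x)); [intros; auto_derive; [lra | field; lra] | apply niy].
  - apply (atom_x Rinv (fun x => - (/ x * / x))); [intros; auto_derive; [lra | field; lra] |].
    apply (next _ _ (nmult _ _ (nc (-1)) (nmult _ _ nix nix))). intros; ring.
  - apply (atom_y Rinv (fun x => - (/ x * / x))); [intros; auto_derive; [lra | field; lra] |].
    apply (next _ _ (nmult _ _ (nc (-1)) (nmult _ _ niy niy))). intros; ring.
  - apply (atom_x (fun x => / (1 + x^2)) (fun x => -2 * x * (/ (1 + x^2) * / (1 + x^2))));
      [intros x Hx; pose proof (pos1 x); auto_derive; [nra | field; nra] |].
    apply (next _ _ (nmult _ _ (nc (-2)) (nmult _ _ nx (nmult _ _ nax nax)))). intros; ring.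
  - apply (atom_y (fun x => / (1 + x^2)) (fun x => -2 * x * (/ (1 + x^2) * / (1 + x^2))));
      [intros x Hx; pose proof (pos1 x); auto_derive; [nra | field; nra] |].
    apply (next _ _ (nmult _ _ (nc (-2)) (nmult _ _ ny (nmult _ _ nay nay)))). intros; ring.
  - destruct IHnice1 as [E1 [X1 Y1]]. destruct IHnice2 as [E2 [X2 Y2]]. split; [|split].
    + intros x y Hu. destruct (E1 x y Hu), (E2 x y Hu). split; [apply (ex_derive_plus (fun t => f t y) (fun t => g t y)) | apply (ex_derive_plus (fun t => f x t) (fun t => g x t))]; auto.
    + apply (next _ _ (nplus _ _ X1 X2)). intros x y Hu. destruct (E1 x y Hu), (E2 x y Hu).
      symmetry. apply (Derive_plus (fun t => f t y) (fun t => g t y)); auto.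
    + apply (next _ _ (nplus _ _ Y1 Y2)). intros x y Hu. destruct (E1 x y Hu), (E2 x y Hu).
      symmetry. apply (Derive_plus (fun t => f x t) (fun t => g x t)); auto.
  - destruct IHnice1 as [E1 [X1 Y1]]. destruct IHnice2 as [E2 [X2 Y2]]. split; [|split].
    + intros x y Hu. destruct (E1 x y Hu), (E2 x y Hu). split; apply ex_derive_mult; auto.
    + apply (next _ _ (nplus _ _ (nmult _ _ X1 H0) (nmult _ _ H X2))). intros x y Hu. destruct (E1 x y Hu), (E2 x y Hu).
      symmetry. apply (Derive_mult (fun t => f t y) (fun t => g t y)); auto.
    + apply (next _ _ (nplus _ _ (nmult _ _ Y1 H0) (nmult _ _ H Y2))). intros x y Hu. destruct (E1 x y Hu), (E2 x y Hu).
      symmetry. apply (Derive_mult (fun t => f x t) (fun t => g x t)); auto.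
  - destruct IHnice as [E1 [X1 Y1]].
    assert (Lx : forall x y, U0 x y -> locally x (fun t => f t y = g t y)).
    { intros x y [Hx Hy]. destruct (loc_pos x Hx) as [e He]. exists e. intros t Ht.
      apply H0. split; auto. }
    assert (Ly : forall x y, U0 x y -> locally y (fun t => f x t = g x t)).
    { intros x y [Hx Hy]. destruct (loc_pos y Hy) as [e He]. exists e. intros t Ht.
      apply H0. split; auto. }
    split; [|split].
    + intros x y Hu. destruct (E1 x y Hu). split.
      * apply (ex_derive_ext_loc (fun t => f t y)); auto.
      * apply (ex_derive_ext_loc (fun t => f x t)); auto.
    + apply (next _ _ X1). intros x y Hu. apply Derive_ext_loc. auto.
    + apply (next _ _ Y1). intros x y Hu. apply Derive_ext_loc. auto.
Qed.
Definition fF (y : R) := 1 - 2 / (1 + y^2).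
Definition sS (y : R) := 4 * y^2 / (1 + y^2)^2.
Definition Ifun (y y' : R) := fF y * fF y' + sS y' * (1 - fF y * (ln y - ln y')).
Definition Dfun (y y' : R) := sS y * fF y' - sS y' * fF y - sS y * sS y' * (ln y - ln y').


Lemma dI (y y' : R) : 0 < y -> is_derive (fun t => Ifun t y') y (Dfun y y' / y).
Proof.
  intros Hy. unfold Ifun, Dfun, fF, sS.
  pose proof (pos1 y) as Hp.
  auto_derive.
  - repeat split; try nra.
  - pose proof (pos1 y'). field; repeat split; nra.
Qed.
Lemma dD (y y' : R) : 0 < y -> is_derive (fun t => Dfun t y') y (-2 * sS y * Ifun y y' / y).
Proof.
  intros Hy. unfold Ifun, Dfun, fF, sS.
  pose proof (pos1 y) as Hp.
  auto_derive.
  - repeat split; try nra.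
  - pose proof (pos1 y'). field; repeat split; nra.
Qed.

Lemma nice_Ck k : forall f, nice f -> forall (U : R -> R -> Prop), (forall x y, U x y -> U0 x y) -> Ck_on k U f.
Proof.
  induction k; intros f Hf U HU; simpl; split.
  - intros x y Hu. apply nice_cont; auto.
  - exact I.
  - intros x y Hu. apply nice_cont; auto.
  - destruct (nice_der f Hf) as [E [X Y]]. split; [|split].
    + intros x y Hu. apply E; auto.
    + apply IHk; auto.
    + apply IHk; auto.
Qed.

Lemma fF_nice_x : nice (fun x _ => fF x).
Proof. apply (next _ _ (nplus _ _ (nc 1) (nmult _ _ (nc (-2)) nax))). intros; unfold fF; field; pose proof (pos1 x); lra. Qed.
Lemma fF_nice_y : nice (fun _ y => fF y).
Proof. apply (next _ _ (nplus _ _ (nc 1) (nmult _ _ (nc (-2)) nay))). intros; unfold fF; field; pose proof (pos1 y); lra. Qed.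
Lemma sS_nice_x : nice (fun x _ => sS x).
Proof. apply (next _ _ (nmult _ _ (nc 4) (nmult _ _ (nmult _ _ nx nx) (nmult _ _ nax nax)))). intros; unfold sS; field; pose proof (pos1 x); lra. Qed.
Lemma sS_nice_y : nice (fun _ y => sS y).
Proof. apply (next _ _ (nmult _ _ (nc 4) (nmult _ _ (nmult _ _ ny ny) (nmult _ _ nay nay)))). intros; unfold sS; field; pose proof (pos1 y); lra. Qed.

Lemma Ifun_nice : nice Ifun.
Proof.
  apply (next _ _ (nplus _ _ (nmult _ _ fF_nice_x fF_nice_y)
     (nmult _ _ sS_nice_y (nplus _ _ (nc 1) (nmult _ _ (nc (-1)) (nmult _ _ fF_nice_x (nplus _ _ nlx (nmult _ _ (nc (-1)) nly)))))))).
  intros; unfold Ifun; ring.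
Qed.
Lemma Dfun_nice : nice Dfun.
Proof.
  apply (next _ _ (nplus _ _ (nmult _ _ sS_nice_x fF_nice_y)
     (nplus _ _ (nmult _ _ (nc (-1)) (nmult _ _ sS_nice_y fF_nice_x))
       (nmult _ _ (nc (-1)) (nmult _ _ (nmult _ _ sS_nice_x sS_nice_y) (nplus _ _ nlx (nmult _ _ (nc (-1)) nly))))))).
  intros; unfold Dfun; ring.
Qed.

Lemma exd_cont (f : R -> R) (x : R) : ex_derive f x -> continuous f x.
Proof. intros H. apply (ex_derive_continuous f x H). Qed.

Lemma is_RInt_zero (a b : R) : is_RInt (fun _ => 0) a b 0.
Proof.
  pose proof (is_RInt_const a b 0) as HH.
  unfold scal in HH; simpl in HH; unfold mult in HH; simpl in HH. rewrite Rmult_0_r in HH. exact HH.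
Qed.

Lemma smooth_d (phi : R -> R) : smooth1 phi -> forall x, ex_derive phi x.
Proof. intros H x. exact (H 1%nat x). Qed.
Lemma smooth_dd (phi : R -> R) : smooth1 phi -> forall x, ex_derive (Derive phi) x.
Proof. intros H x. exact (H 2%nat x). Qed.

Lemma supp_edge (phi : R -> R) (a b c : R) : supported_in phi a b -> continuous phi c ->
  (forall e, 0 < e -> exists t, Rabs (t - c) < e /\ (t < a \/ b < t)) -> phi c = 0.
Proof.
  intros Hs Hc Hn. destruct (Req_dec (phi c) 0) as [E|E]; auto. exfalso.
  assert (Hp : 0 < Rabs (phi c)) by (apply Rabs_pos_lt; auto).
  destruct (Hc (ball (phi c) (mkposreal _ Hp))) as [d Hd].
  { exists (mkposreal _ Hp). auto. }
  destruct (Hn d (cond_pos d)) as [t [Ht1 Ht2]].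
  specialize (Hd t Ht1). rewrite (Hs t Ht2) in Hd.
  change (Rabs (0 - phi c) < Rabs (phi c)) in Hd.
  rewrite Rminus_0_l, Rabs_Ropp in Hd. lra.
Qed.

Lemma supp_a (phi : R -> R) a b : supported_in phi a b -> smooth1 phi -> phi a = 0.
Proof.
  intros Hs Hsm. apply (supp_edge phi a b a Hs).
  - apply exd_cont. apply smooth_d; auto.
  - intros e He. exists (a - e/2). split; [|left; lra].
    rewrite Rabs_left; lra.
Qed.
Lemma supp_b (phi : R -> R) a b : supported_in phi a b -> smooth1 phi -> phi b = 0.
Proof.
  intros Hs Hsm. apply (supp_edge phi a b b Hs).
  - apply exd_cont. apply smooth_d; auto.
  - intros e He. exists (b + e/2). split; [|right; lra].
    rewrite Rabs_right; lra.
Qed.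

Lemma green_core (phi : R -> R) a b y' (V V' H : R -> R) :
  0 < a -> a < b -> 0 < y' -> smooth1 phi -> supported_in phi a b ->
  (forall t, 0 < t -> is_derive V t (V' t)) -> (forall t, 0 < t -> continuous V' t) -> V y' = 1 ->
  (forall t, a < t -> t < y' -> H t = 0) ->
  (forall t, y' < t -> t < b -> H t = -(V' t * phi t + V t * Derive phi t)) ->
  is_RInt H a b (phi y').
Proof.
  intros Ha Hab Hy Hsm Hsu HV HV' V1 H0 H1.
  destruct (Rle_dec b y') as [Hb|Hb].
  - replace (phi y') with 0.
    2:{ destruct (Req_dec b y') as [E|E]. subst. symmetry; eapply supp_b; eauto.
        symmetry. apply Hsu. right; lra. }
    apply (is_RInt_ext (fun _ => 0)).
    + intros x Hx. rewrite Rmin_left in Hx by lra. rewrite Rmax_right in Hx by lra.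
      symmetry; apply H0; lra.
    + apply is_RInt_zero.
  - set (c := Rmax a y').
    assert (Hac : a <= c) by apply Rmax_l.
    assert (Hyc : y' <= c) by apply Rmax_r.
    assert (Hcb : c < b) by (unfold c; apply Rmax_lub_lt; lra).
    assert (I1 : is_RInt H a c 0).
    { apply (is_RInt_ext (fun _ => 0)).
      + intros x Hx. rewrite Rmin_left in Hx by lra. rewrite Rmax_right in Hx by lra.
        symmetry; apply H0; [lra|]. unfold c in Hx. destruct (Rle_dec a y').
        * rewrite Rmax_right in Hx; lra.
        * rewrite Rmax_left in Hx; lra.
      + apply is_RInt_zero. }
    set (F := fun t => - (V t * phi t)).
    set (dF := fun t => -(V' t * phi t + V t * Derive phi t)).
    assert (I2 : is_RInt dF c b (minus (F b) (F c))).
    { apply (is_RInt_derive F dF c b).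
      + intros x Hx. rewrite Rmin_left in Hx by lra. rewrite Rmax_right in Hx by lra.
        unfold F, dF. apply (is_derive_opp (fun t => V t * phi t)).
        apply Derive.is_derive_mult.
        * apply HV; lra.
        * apply Derive_correct. apply smooth_d; auto.
      + intros x Hx. rewrite Rmin_left in Hx by lra. rewrite Rmax_right in Hx by lra.
        unfold dF. apply (continuous_opp (fun t => V' t * phi t + V t * Derive phi t)).
        apply (continuous_plus (fun t => V' t * phi t) (fun t => V t * Derive phi t)).
        * apply (continuous_mult V' phi). apply HV'; lra.
          apply exd_cont; apply smooth_d; auto.
        * apply (continuous_mult V (Derive phi)).
          apply exd_cont. exists (V' x). apply HV; lra.
          apply exd_cont; apply smooth_dd; auto. }
    assert (I3 : is_RInt H c b (minus (F b) (F c))).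
    { apply (is_RInt_ext dF); auto.
      intros x Hx. rewrite Rmin_left in Hx by lra. rewrite Rmax_right in Hx by lra.
      symmetry. apply H1; lra. }
    pose proof (is_RInt_Chasles H a c b _ _ I1 I3) as I4.
    replace (phi y') with (plus 0 (minus (F b) (F c))); auto.
     unfold F. rewrite (supp_b phi a b Hsu Hsm).
    unfold minus, plus, opp; simpl. 
    unfold c. destruct (Rle_dec a y').
    + rewrite Rmax_right by lra. rewrite V1. ring.
    + rewrite Rmax_left by lra. rewrite (supp_a phi a b Hsu Hsm).
      rewrite (Hsu y') by (left; lra). ring.
Qed.

Ltac rring := match goal with |- @eq _ ?a ?b => change (@eq R a b); ring end.

Lemma s8 : 0 < sqrt 8.
Proof. apply sqrt_lt_R0. lra. Qed.
Lemma Qpos y : 0 < Q y.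
Proof. unfold Q. pose proof s8. pose proof (pos1 y). apply Rdiv_lt_0_compat; lra. Qed.
Lemma QQ t : Q t * Q t = 8 / (1 + t^2)^2.
Proof. unfold Q. pose proof (pos1 t). pose proof (sqrt_sqrt 8 ltac:(lra)).
  unfold Rdiv. replace (sqrt 8 * / (1 + t ^ 2) * (sqrt 8 * / (1 + t ^ 2))) with ((sqrt 8 * sqrt 8) * (/ (1 + t^2))^2) by ring.
  rewrite H0. field. lra. Qed.
Lemma ind1 t : 0 < t -> ind_pos t = 1.
Proof. intros H. unfold ind_pos. destruct (Rlt_dec 0 t); lra. Qed.
Lemma ind0 t : t <= 0 -> ind_pos t = 0.
Proof. intros H. unfold ind_pos. destruct (Rlt_dec 0 t); lra. Qed.
Lemma Ifun_diag y : Ifun y y = 1.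
Proof. unfold Ifun, fF, sS. pose proof (pos1 y). rewrite Rminus_diag. field. lra. Qed.
Lemma Dfun_diag y : Dfun y y = 0.
Proof. unfold Dfun. rewrite Rminus_diag. ring. Qed.

Lemma J_lemma y' y : 0 < y' -> 0 <= y ->
  is_RInt (fun s => Q s * G_L Ifun s y' * s) 0 y (if Rle_dec y y' then 0 else - Dfun y y' / Q y').
Proof.
  intros Hy' Hy.
  assert (Z : forall z, 0 <= z <= y' -> is_RInt (fun s => Q s * G_L Ifun s y' * s) 0 z 0).
  { intros z Hz. apply (is_RInt_ext (fun _ => 0)); [| apply is_RInt_zero].
    intros x Hx. rewrite Rmin_left in Hx by lra. rewrite Rmax_right in Hx by lra.
    unfold G_L. rewrite ind0 by lra. ring_simplify; reflexivity. }
  destruct (Rle_dec y y') as [Hle|Hlt]; [apply Z; lra|].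
  pose proof (Qpos y') as Qy.
  set (W := fun t => (- / Q y') * Dfun t y').
  assert (I2 : is_RInt (fun s => Q s * (Q s / Q y' * Ifun s y') * s) y' y (minus (W y) (W y'))).
  { apply (is_RInt_derive W).
    - intros x Hx. rewrite Rmin_left in Hx by lra. rewrite Rmax_right in Hx by lra.
      assert (Hd : is_derive W x ((- / Q y') * (-2 * sS x * Ifun x y' / x))).
      { apply is_derive_scal. apply dD. lra. }
      replace (Q x * (Q x / Q y' * Ifun x y') * x) with ((- / Q y') * (-2 * sS x * Ifun x y' / x)); auto.
      replace (Q x * (Q x / Q y' * Ifun x y') * x) with ((Q x * Q x) * Ifun x y' * x / Q y') by (field; lra).
      rewrite QQ. unfold sS. pose proof (pos1 x). field. repeat split; nra.
    - intros x Hx. rewrite Rmin_left in Hx by lra. rewrite Rmax_right in Hx by lra.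
      apply exd_cont. unfold Q, Ifun, fF, sS. pose proof (pos1 x). pose proof (pos1 y').
      auto_derive. repeat split; try nra. }
  assert (I3 : is_RInt (fun s => Q s * G_L Ifun s y' * s) y' y (minus (W y) (W y'))).
  { apply (is_RInt_ext (fun s => Q s * (Q s / Q y' * Ifun s y') * s)); auto.
    intros x Hx. rewrite Rmin_left in Hx by lra. rewrite Rmax_right in Hx by lra.
    unfold G_L. rewrite ind1 by lra. rring. }
  pose proof (is_RInt_Chasles _ 0 y' y _ _ (Z y' ltac:(lra)) I3) as I4.
  replace (- Dfun y y' / Q y') with (plus 0 (minus (W y) (W y'))); auto.
  unfold W, minus, plus, opp; simpl. rewrite Dfun_diag. field. lra.
Qed.

Lemma green_LQ : outgoing_Green_LQ (G_L Ifun).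
Proof.
  intros y' Hy'. split.
  2:{ intros y Hy. unfold G_L. rewrite ind0 by lra. ring. }
  intros phi a b Ha Hab Hsm Hsu. pose proof (Qpos y') as Qy.
  assert (HI : is_RInt (fun y => G_L Ifun y y' * (- Derive phi y - Atheta y / y * phi y)
                      + Q y / y * phi y * RInt (fun s => Q s * G_L Ifun s y' * s) 0 y) a b (phi y')).
  { apply (green_core phi a b y' (fun t => Q t / Q y' * Ifun t y')
      (fun t => Atheta t / t * Q t / Q y' * Ifun t y' + Q t / Q y' * (Dfun t y' / t))); auto.
    - intros t Ht. unfold Q, Atheta, Ifun, Dfun, fF, sS. pose proof (pos1 t). pose proof (pos1 y'). pose proof s8.
      auto_derive. repeat split; try nra. field. repeat split; nra.
    - intros t Ht. apply exd_cont. unfold Q, Atheta, Ifun, Dfun, fF, sS. pose proof (pos1 t). pose proof (pos1 y'). pose proof s8.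
      auto_derive. repeat split; try nra.
    - rewrite Ifun_diag. field. lra.
    - intros t Ht1 Ht2. rewrite (is_RInt_unique _ _ _ _ (J_lemma y' t Hy' ltac:(lra))).
      destruct (Rle_dec t y'); [|lra]. unfold G_L. rewrite ind0 by lra. ring.
    - intros t Ht1 Ht2. rewrite (is_RInt_unique _ _ _ _ (J_lemma y' t Hy' ltac:(lra))).
      destruct (Rle_dec t y'); [lra|]. unfold G_L. rewrite ind1 by lra. field. lra. }
  split; [|split].
  - intros y Hy. eexists. apply J_lemma; lra.
  - eexists; exact HI.
  - apply is_RInt_unique. exact HI.
Qed.

Lemma green_iLQ : outgoing_Green_iLQ G_iL.
Proof.
  intros y' Hy'. split.
  2:{ intros y Hy. unfold G_iL. rewrite ind0 by lra. ring. }
  intros phi a b Ha Hab Hsm Hsu. pose proof (Qpos y') as Qy.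
  assert (HI : is_RInt (fun y => G_iL y y' * (- Derive phi y - Atheta y / y * phi y)) a b (phi y')).
  { apply (green_core phi a b y' (fun t => Q t / Q y') (fun t => Atheta t / t * Q t / Q y')); auto.
    - intros t Ht. unfold Q, Atheta. pose proof (pos1 t). pose proof (pos1 y'). pose proof s8.
      auto_derive. repeat split; try nra. field. repeat split; nra.
    - intros t Ht. apply exd_cont. unfold Q, Atheta. pose proof (pos1 t). pose proof (pos1 y'). pose proof s8.
      auto_derive. repeat split; try nra.
    - field. lra.
    - intros t Ht1 Ht2. unfold G_iL. rewrite ind0 by lra. ring.
    - intros t Ht1 Ht2. unfold G_iL. rewrite ind1 by lra. field. lra. }
  split.
  - eexists; exact HI.
  - apply is_RInt_unique. exact HI.
Qed.

Lemma lnq x y : 0 < x -> 0 < y -> ln x - ln y = ln (x / y).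
Proof.
  intros Hx Hy. replace x with ((x / y) * y) at 1 by (field; lra).
  rewrite ln_mult; [ring | apply Rdiv_lt_0_compat; lra | lra].
Qed.
Lemma ln_m1 x : 0 < x -> ln x <= x - 1.
Proof. intros Hx. pose proof (exp_ineq1_le (ln x)). rewrite exp_ln in H; lra. Qed.
Lemma ln_nonneg x : 1 <= x -> 0 <= ln x.
Proof. intros H. rewrite <- ln_1. apply ln_le; lra. Qed.

Lemma jb_sq a : jb a ^ 2 = 1 + a^2.
Proof. unfold jb. apply pow2_sqrt. pose proof (pos1 a). lra. Qed.
Lemma jb_pos a : 0 < jb a.
Proof. unfold jb. apply sqrt_lt_R0. apply pos1. Qed.
Lemma jb_ge1 a : 1 <= jb a.
Proof. pose proof (jb_sq a). pose proof (jb_pos a). nra. Qed.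
Lemma jb_ge a : a <= jb a.
Proof. pose proof (jb_sq a). pose proof (jb_pos a). nra. Qed.

Lemma wlog_ge1 y y' : 1 <= wlog y y'.
Proof.
  unfold wlog. pose proof (jb_pos y). pose proof (jb_pos y').
  assert (0 <= ln (2 + jb y / jb y')).
  { apply ln_nonneg. assert (0 < jb y / jb y') by (apply Rdiv_lt_0_compat; lra). lra. }
  assert (0 < / jb y' ^ 2) by (apply Rinv_0_lt_compat; apply pow_lt; lra).
  nra.
Qed.

Lemma fF_bd y : Rabs (fF y) <= 1.
Proof. unfold fF. pose proof (pos1 y). apply Rabs_le. split.
  - assert (2 / (1 + y^2) <= 2) by (apply Rle_div_l; nra). lra.
  - assert (0 <= 2 / (1 + y^2)) by (apply Rle_mult_inv_pos; lra). lra.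
Qed.
Lemma sS_nn y : 0 <= sS y.
Proof. unfold sS. pose proof (pos1 y). apply Rle_mult_inv_pos; [nra | apply pow_lt; lra]. Qed.
Lemma sS_le y : sS y <= 4 / jb y ^ 2.
Proof. unfold sS. rewrite jb_sq. pose proof (pos1 y).
  apply (Rmult_le_reg_r ((1 + y^2)^2)); [apply pow_lt; lra|].
  field_simplify; try lra. Qed.

Lemma I_bound y y' : 0 < y' -> y' < y -> Rabs (Ifun y y') <= 9 * wlog y y'.
Proof.
  intros Hy' Hyy.
  set (L := ln y - ln y').
  assert (HL : 0 <= L) by (unfold L; pose proof (ln_increasing y' y Hy' Hyy); lra).
  pose proof (fF_bd y) as F1. pose proof (fF_bd y') as F2. pose proof (sS_nn y') as S0.
  pose proof (sS_le y') as S1. pose proof (jb_ge1 y') as J1. pose proof (jb_pos y') as J0.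
  pose proof (jb_pos y) as Jy. pose proof (jb_ge y) as Jyy. pose proof (jb_ge y') as Jyy'.
  assert (A1 : Rabs (fF y * fF y') <= 1).
  { rewrite Rabs_mult. pose proof (Rabs_pos (fF y)). pose proof (Rabs_pos (fF y')). nra. }
  assert (A2 : Rabs (sS y' * (1 - fF y * L)) <= sS y' * (1 + L)).
  { rewrite Rabs_mult, (Rabs_right (sS y')) by lra. apply Rmult_le_compat_l; auto.
    eapply Rle_trans; [apply Rabs_triang|]. rewrite Rabs_Ropp, Rabs_R1, Rabs_mult, (Rabs_right L) by lra.
    pose proof (Rabs_pos (fF y)). nra. }
  set (r := jb y / jb y').
  assert (Hr : 0 < r) by (unfold r; apply Rdiv_lt_0_compat; lra).
  set (M := ln (2 + r)).
  assert (HM : 0 <= M) by (apply ln_nonneg; lra).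
  assert (L1 : L <= M + jb y' / y').
  { unfold L. assert (ln y <= ln (jb y)) by (apply ln_le; lra).
    assert (ln (jb y) - ln (jb y') <= M).
    { rewrite lnq by lra. apply ln_le; [apply Rdiv_lt_0_compat; lra | unfold r; lra]. }
    assert (ln (jb y') - ln y' <= jb y' / y').
    { rewrite lnq by lra. pose proof (ln_m1 (jb y' / y') ltac:(apply Rdiv_lt_0_compat; lra)). lra. }
    lra. }
  assert (L2 : sS y' * (jb y' / y') <= 4).
  { unfold sS. rewrite <- jb_sq. replace (4 * y' ^ 2 / (jb y' ^ 2) ^ 2 * (jb y' / y')) with (4 * (y' / jb y') / (jb y' ^ 2)) by (field; lra).
    assert (y' / jb y' <= 1) by (apply Rle_div_l; lra).
    assert (1 <= jb y' ^ 2) by nra.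
    apply Rle_div_l; [nra|]. nra. }
  assert (L3 : sS y' * M <= 4 / jb y' ^ 2 * M) by (apply Rmult_le_compat_r; auto).
  assert (L4 : 4 / jb y' ^ 2 <= 4) by (apply Rle_div_l; nra).
  assert (W : wlog y y' = 1 + / jb y' ^ 2 * M) by reflexivity.
  pose proof (wlog_ge1 y y').
  assert (sS y' * L <= sS y' * (M + jb y' / y')) by (apply Rmult_le_compat_l; auto).
  unfold Ifun. fold L. eapply Rle_trans; [apply Rabs_triang|].
  assert (4 / jb y' ^ 2 * M = 4 * (/ jb y' ^ 2 * M)) by (unfold Rdiv; ring).
  nra.
Qed.

Lemma yDy_I y y' : 0 < y -> yDy Ifun y y' = Dfun y y'.
Proof.
  intros Hy. unfold yDy. replace (Derive (fun t => Ifun t y') y) with (Dfun y y' / y) by (symmetry; apply is_derive_unique; apply dI; exact Hy). field. lra.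
Qed.

Lemma Dfun_form y y' : 0 < y -> 0 < y' -> Dfun y y' =
  - (4 * (y^2 - y'^2) * (y^2 * y'^2 + 1) + 16 * y^2 * y'^2 * (ln y - ln y')) / ((1 + y^2)^2 * (1 + y'^2)^2).
Proof. intros. unfold Dfun, sS, fF. pose proof (pos1 y). pose proof (pos1 y'). field. lra. Qed.

Lemma D_bound y y' : 0 < y' -> y' < y ->
  Rabs (Dfun y y') <= 24 * ((y - y') / y * Rmin (y ^ 2 / (jb y) ^ 2) (/ (jb y') ^ 2)).
Proof.
  intros Hy' Hyy. rewrite !jb_sq. rewrite Dfun_form by lra.
  set (p := y^2). set (q := y'^2). set (L := ln y - ln y').
  assert (Hp : 0 < p) by (unfold p; nra). assert (Hq : 0 < q) by (unfold q; nra).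
  assert (HL : 0 <= L) by (unfold L; pose proof (ln_increasing y' y Hy' Hyy); lra).
  assert (HL2 : L <= (y - y') / y').
  { unfold L. rewrite lnq by lra. pose proof (ln_m1 (y / y') ltac:(apply Rdiv_lt_0_compat; lra)).
    replace ((y - y') / y') with (y / y' - 1) by (field; lra). lra. }
  set (e := (y - y') / y).
  assert (He : 0 < e) by (unfold e; apply Rdiv_lt_0_compat; lra).
  assert (Hpq : q < p) by (unfold p, q; nra).
  assert (C1 : 4 * (p - q) * (p * q + 1) <= e * (8 * p * (1 + p) * (1 + q))).
  { assert (E1 : e * p = (y - y') * y) by (unfold e, p; field; lra).
    assert (E2 : p - q = (y - y') * (y + y')) by (unfold p, q; ring).
    rewrite E2. replace (e * (8 * p * (1 + p) * (1 + q))) with (8 * (e * p) * ((1 + p) * (1 + q))) by ring.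
    rewrite E1. assert (0 < y - y') by lra. assert (p * q + 1 <= (1 + p) * (1 + q)) by nra.
    assert (0 <= p * q + 1) by nra.
    assert (y + y' <= 2 * y) by lra.
    assert ((y - y') * (y + y') <= (y - y') * (2 * y)) by nra.
    assert (0 <= (y - y') * (y + y')) by nra. nra. }
  assert (C2 : 16 * p * q * L <= e * (16 * p * p)).
  { assert (16 * p * q * L <= 16 * p * q * ((y - y') / y')) by (apply Rmult_le_compat_l; nra).
    assert (E3 : 16 * p * q * ((y - y') / y') = 16 * p * y' * (y - y')) by (unfold q; field; lra).
    assert (E4 : e * (16 * p * p) = 16 * p * y * (y - y')) by (unfold e, p; field; lra).
    assert (16 * p * y' * (y - y') <= 16 * p * y * (y - y')).
    { apply Rmult_le_compat_r; [lra|]. nra. }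
    lra. }
  set (N := 8 * p * (1 + p) * (1 + q) + 16 * p * p).
  set (den := (1 + p)^2 * (1 + q)^2).
  assert (Hden : 0 < den) by (unfold den; apply Rmult_lt_0_compat; apply pow_lt; lra).
  assert (Hnum : 0 <= 4 * (p - q) * (p * q + 1) + 16 * p * q * L) by (assert (0 <= p * q * L) by (apply Rmult_le_pos; nra); assert (0 <= (p - q) * (p * q + 1)) by (apply Rmult_le_pos; nra); nra).
  replace (Rabs _) with ((4 * (p - q) * (p * q + 1) + 16 * p * q * L) / den).
  2:{ unfold Rdiv. rewrite Rabs_mult, Rabs_Ropp, (Rabs_right (/ den)) by (left; apply Rinv_0_lt_compat; lra). rewrite (Rabs_right (4 * (p - q) * (p * q + 1) + 16 * p * q * L)) by lra. reflexivity. }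
  assert (B : (4 * (p - q) * (p * q + 1) + 16 * p * q * L) / den <= e * (N / den)).
  { unfold Rdiv. rewrite <- Rmult_assoc. apply Rmult_le_compat_r; [left; apply Rinv_0_lt_compat; lra|].
    unfold N. lra. }
  eapply Rle_trans; [exact B|].
  replace (24 * (e * Rmin (p / (1 + p)) (/ (1 + q)))) with (e * (24 * Rmin (p / (1 + p)) (/ (1 + q)))) by ring.
  apply Rmult_le_compat_l; [lra|].
  apply Rmin_case.
  - apply Rle_div_l; [lra|]. unfold den, N. 
    replace (24 * (p / (1 + p)) * ((1 + p) ^ 2 * (1 + q) ^ 2)) with (24 * p * (1 + p) * (1 + q)^2) by (field; lra).
    assert (0 <= p * (1 + p) * q) by nra. assert (0 <= p * (1+p) * q * q) by nra. nra.
  - apply Rle_div_l; [lra|]. unfold den, N.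
    replace (24 * / (1 + q) * ((1 + p) ^ 2 * (1 + q) ^ 2)) with (24 * (1 + p)^2 * (1 + q)) by (field; lra).
    assert (0 <= p * (1 + p) * q) by nra. assert (0 <= p * p * q) by nra. nra.
Qed.

Lemma nice_eps f : nice f -> forall y0, 0 < y0 -> forall eps, 0 < eps -> exists delta, 0 < delta /\
  forall y y', Rabs (y - y0) < delta -> Rabs (y' - y0) < delta -> Rabs (f y y' - f y0 y0) < eps.
Proof.
  intros Hf y0 Hy0 eps He.
  pose proof (nice_cont f Hf y0 y0 (conj Hy0 Hy0)) as Hc.
  destruct (Hc (ball (f y0 y0) (mkposreal eps He))) as [d Hd].
  { exists (mkposreal eps He). auto. }
  exists d. split; [apply cond_pos|]. intros y y' H1 H2.
  assert (Hb : ball (y0, y0) d (y, y')) by (split; assumption).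
  specialize (Hd _ Hb). exact Hd.
Qed.

Lemma lim_I : forall y0, 0 < y0 -> forall eps, 0 < eps -> exists delta, 0 < delta /\
        forall y y', 0 < y' -> y' < y -> Rabs (y - y0) < delta -> Rabs (y' - y0) < delta ->
          Rabs (Ifun y y' - 1) < eps.
Proof.
  intros y0 Hy0 eps He. destruct (nice_eps Ifun Ifun_nice y0 Hy0 eps He) as [d [Hd H]].
  exists d. split; auto. intros y y' _ _ H1 H2. rewrite <- (Ifun_diag y0). auto.
Qed.

Lemma lim_D : forall y0, 0 < y0 -> forall eps, 0 < eps -> exists delta, 0 < delta /\
        forall y y', 0 < y' -> y' < y -> Rabs (y - y0) < delta -> Rabs (y' - y0) < delta ->
          Rabs (yDy Ifun y y') < eps.
Proof.
  intros y0 Hy0 eps He. destruct (nice_eps Dfun Dfun_nice y0 Hy0 eps He) as [d [Hd H]].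
  exists d. split; auto. intros y y' H0 H0' H1 H2. rewrite yDy_I by lra.
  specialize (H y y' H1 H2). rewrite Dfun_diag, Rminus_0_r in H. exact H.
Qed.

Definition term := (R * nat * nat)%type.
Fixpoint evalL (L : list term) (y : R) : R :=
  match L with
  | nil => 0
  | (c, a, n) :: L' => c * y ^ a / (1 + y ^ 2) ^ n + evalL L' y
  end.
Definition dterm (t : term) : list term :=
  let '(c, a, n) := t in (c * INR a, pred a, n) :: (-2 * INR n * c, S a, S n) :: nil.
Definition derivL (L : list term) : list term := flat_map dterm L.
Definition ydterm (t : term) : list term :=
  let '(c, a, n) := t in (c * INR a, a, n) :: (-2 * INR n * c, S (S a), S n) :: nil.
Definition yderivL (L : list term) : list term := flat_map ydterm L.
Definition sterm (t : term) : term := let '(c, a, n) := t in (4 * c, S (S a), S (S n)).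
Definition smulL (L : list term) : list term := map sterm L.
Definition scterm (k : R) (t : term) : term := let '(c, a, n) := t in (k * c, a, n).
Definition scaleL (k : R) (L : list term) : list term := map (scterm k) L.

Lemma evalL_app L1 L2 y : evalL (L1 ++ L2) y = evalL L1 y + evalL L2 y.
Proof. induction L1 as [|[[c a] n] L IH]; simpl; [ring | rewrite IH; ring]. Qed.
Lemma evalL_scale k L y : evalL (scaleL k L) y = k * evalL L y.
Proof. induction L as [|[[c a] n] L IH]; simpl; [ring | rewrite IH; unfold Rdiv; ring]. Qed.
Lemma evalL_smul L y : evalL (smulL L) y = sS y * evalL L y.
Proof.
  induction L as [|[[c a] n] L IH]; simpl; [ring | rewrite IH]. unfold sS.
  pose proof (pos1 y). simpl. field. split; try lra. apply pow_nonzero. lra.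
Qed.
Lemma dterm_ok c a n y : is_derive (fun x => c * x ^ a / (1 + x ^ 2) ^ n) y (evalL (dterm (c, a, n)) y).
Proof.
  pose proof (pos1 y) as Hp. assert (Hn : (1 + y^2)^n <> 0) by (apply pow_nonzero; lra).
  auto_derive; auto.
  simpl. replace (1 + y * (y * 1)) with (1 + y ^ 2) by ring.
  set (z := 1 + y ^ 2) in *. clearbody z.
  destruct n as [|k].
  { simpl. field. lra. }
  assert (Hk : z^k <> 0) by (apply pow_nonzero; lra).
  simpl pred. rewrite S_INR. replace (z ^ S k) with (z * z ^ k) by (simpl; ring).
  field. split; auto. lra.
Qed.

Lemma derivL_ok L y : is_derive (evalL L) y (evalL (derivL L) y).
Proof.
  induction L as [|[[c a] n] L IH].
  - simpl. apply (is_derive_const 0).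
  - change (derivL ((c, a, n) :: L)) with (dterm (c, a, n) ++ derivL L).
    rewrite evalL_app.
    apply (is_derive_plus (fun x => c * x ^ a / (1 + x ^ 2) ^ n) (evalL L)); auto.
    apply dterm_ok.
Qed.


Lemma yderiv_ok L y : evalL (yderivL L) y = y * evalL (derivL L) y.
Proof.
  induction L as [|[[c a] n] L IH]; simpl; [ring|]. rewrite IH.
  destruct a as [|a].
  - simpl. unfold Rdiv. ring.
  - simpl. unfold Rdiv. ring.
Qed.

Definition iterD (j : nat) (L : list term) : list term := Nat.iter j derivL L.

Lemma Derive_n_evalL j L y : Derive_n (evalL L) j y = evalL (iterD j L) y.
Proof.
  revert y. induction j; intros y; [reflexivity|].
  simpl. rewrite (Derive_ext _ (evalL (iterD j L))) by auto.
  apply is_derive_unique. apply derivL_ok.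
Qed.
Lemma ex_derive_n_evalL j L y : ex_derive_n (evalL L) j y.
Proof.
  destruct j; simpl; [exact I|].
  apply (ex_derive_ext (evalL (iterD j L))).
  - intros t. symmetry. apply Derive_n_evalL.
  - eexists. apply derivL_ok.
Qed.

Fixpoint AB (k : nat) : list term * list term :=
  match k with
  | O => ((1, O, O) :: nil, nil)
  | S k => let (A, B) := AB k in (yderivL A ++ scaleL (-2) (smulL B), A ++ yderivL B)
  end.

Lemma rep k y y' : 0 < y ->
  yDy_iter k Ifun y y' = evalL (fst (AB k)) y * Ifun y y' + evalL (snd (AB k)) y * Dfun y y'.
Proof.
  revert y. induction k; intros y Hy.
  - simpl. field. 
  - change (yDy_iter (S k) Ifun y y') with (y * Derive (fun t => yDy_iter k Ifun t y') y).
    rewrite (Derive_ext_loc _ (fun t => evalL (fst (AB k)) t * Ifun t y' + evalL (snd (AB k)) t * Dfun t y')).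
    2:{ destruct (loc_pos y Hy) as [e He]. exists e. intros t Ht. apply IHk. apply He. exact Ht. }
    set (A := fst (AB k)). set (B := snd (AB k)).
    assert (Hd : is_derive (fun t => evalL A t * Ifun t y' + evalL B t * Dfun t y') y
      ((evalL (derivL A) y * Ifun y y' + evalL A y * (Dfun y y' / y)) +
       (evalL (derivL B) y * Dfun y y' + evalL B y * (-2 * sS y * Ifun y y' / y)))).
    { apply (is_derive_plus (fun t => evalL A t * Ifun t y') (fun t => evalL B t * Dfun t y')).
      - apply (Derive.is_derive_mult (evalL A) (fun t => Ifun t y')); [apply derivL_ok | apply dI; auto].
      - apply (Derive.is_derive_mult (evalL B) (fun t => Dfun t y')); [apply derivL_ok | apply dD; auto]. }
    apply is_derive_unique in Hd. match type of Hd with _ = ?v => transitivity (y * v); [f_equal; exact Hd|] end. unfold A, B. clear A B Hd.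
    simpl AB. destruct (AB k) as [A B]. simpl fst; simpl snd.
    rewrite !evalL_app, evalL_scale, evalL_smul, !yderiv_ok.
    field. lra.
Qed.

Definition goodT (i : nat) (t : term) : Prop :=
  let '(c, a, n) := t in c = 0 \/ (2 <= a + i /\ a + 2 + i <= 2 * n)%nat.
Definition good (i : nat) (L : list term) : Prop := List.Forall (goodT i) L.

Lemma good_app i L1 L2 : good i L1 -> good i L2 -> good i (L1 ++ L2).
Proof. intros H1 H2. apply List.Forall_app; split; auto. Qed.
Lemma good_flat i j (f : term -> list term) L : (forall t, goodT i t -> good j (f t)) -> good i L -> good j (flat_map f L).
Proof. intros Hf HL. induction HL; simpl; [constructor|]. apply good_app; auto. Qed.

Lemma good_deriv i L : good i L -> good (S i) (derivL L).
Proof.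
  apply good_flat. intros [[c a] n] H. simpl in H. constructor; [|constructor; [|constructor]]; simpl.
  - destruct H as [H|H]; [left; subst; ring|].
    destruct a; [left; simpl; ring | right; simpl; lia].
  - destruct H as [H|H]; [left; subst; ring| right; lia].
Qed.
Lemma good_yderiv L : good 0 L -> good 0 (yderivL L).
Proof.
  apply good_flat. intros [[c a] n] H. simpl in H. constructor; [|constructor; [|constructor]]; simpl.
  - destruct H as [H|H]; [left; subst; ring| right; lia].
  - destruct H as [H|H]; [left; subst; ring| right; lia].
Qed.
Lemma good_smul L : good 0 L -> good 0 (smulL L).
Proof.
  intros H. apply List.Forall_map. eapply List.Forall_impl; [|exact H]. intros [[c a] n] Ht. simpl in *.
  destruct Ht as [Ht|Ht]; [left; subst; ring| right; lia].
Qed.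
Lemma good_scale k L : good 0 L -> good 0 (scaleL k L).
Proof.
  intros H. apply List.Forall_map. eapply List.Forall_impl; [|exact H]. intros [[c a] n] Ht. simpl in *.
  destruct Ht as [Ht|Ht]; [left; subst; ring| right; lia].
Qed.

Lemma AB_good k : good 0 (fst (AB (S (S k)))) /\ good 0 (snd (AB (S (S k)))).
Proof.
  induction k.
  - simpl. split; repeat (apply List.Forall_cons; [simpl; first [left; ring | right; lia] |]); apply List.Forall_nil.
  - destruct IHk as [HA HB]. change (AB (S (S (S k)))) with
      (let (A, B) := AB (S (S k)) in (yderivL A ++ scaleL (-2) (smulL B), A ++ yderivL B)).
    destruct (AB (S (S k))) as [A B]. simpl in *. split.
    + apply good_app; [apply good_yderiv; auto | apply good_scale; apply good_smul; auto].
    + apply good_app; [auto | apply good_yderiv; auto].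
Qed.

Lemma term_bd b n y : (2 <= b)%nat -> (b + 2 <= 2 * n)%nat -> 0 < y ->
  y ^ b / (1 + y ^ 2) ^ n <= 2 * (y ^ 2 / (1 + y ^ 4)).
Proof.
  intros Hb Hn Hy. pose proof (pos1 y) as Hp.
  assert (Hq : 0 < (1 + y^2)^n) by (apply pow_lt; lra).
  assert (H4 : 0 < 1 + y^4) by (pose proof (pow_le y 4 ltac:(lra)); lra).
  destruct (Rle_dec y 1) as [Hle|Hgt].
  - assert (E : y ^ b = y^2 * y^(b - 2)) by (rewrite <- pow_add; f_equal; lia).
    assert (B1 : y^(b-2) <= 1) by (rewrite <- (pow1 (b-2)); apply pow_incr; lra).
    assert (B2 : 1 <= (1 + y^2)^n) by (apply pow_R1_Rle; nra).
    assert (B3 : y^b <= y^2) by (rewrite E; assert (0 <= y^2) by nra; nra).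
    assert (B4 : y^b / (1 + y^2)^n <= y^2).
    { apply Rle_div_l; [lra|]. assert (0 <= y^b) by (apply pow_le; lra). nra. }
    assert (y^4 <= 1) by (rewrite <- (pow1 4); apply pow_incr; lra).
    assert (y^2 <= 2 * (y^2 / (1 + y^4))).
    { replace (2 * (y ^ 2 / (1 + y ^ 4))) with (2 * y^2 * / (1 + y^4)) by (unfold Rdiv; ring).
      apply Rmult_le_reg_r with (1 + y^4); [lra|]. rewrite Rmult_assoc, Rinv_l by lra.
      assert (0 <= y^2) by nra. nra. }
    lra.
  - assert (Hy1 : 1 <= y) by lra.
    destruct n as [|[|m]]; [lia|lia|].
    assert (B1 : y^b <= (y^2)^(S m)) by (rewrite <- pow_mult; apply Rle_pow; [lra|lia]).
    assert (B2 : (y^2)^(S (S m)) <= (1 + y^2)^(S (S m))) by (apply pow_incr; nra).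
    assert (P1 : 0 < (y^2)^(S m)) by (apply pow_lt; nra).
    assert (E : (y^2)^(S (S m)) = y^2 * (y^2)^(S m)) by reflexivity.
    assert (B3 : y^b / (1 + y^2)^(S (S m)) <= / y^2).
    { apply Rle_div_l; [lra|]. 
      assert (/ y^2 * (y^2)^(S (S m)) = (y^2)^(S m)) by (rewrite E; field; nra).
      assert (0 <= / y^2) by (left; apply Rinv_0_lt_compat; nra).
      assert (/ y^2 * (y^2)^(S (S m)) <= / y ^ 2 * (1 + y ^ 2) ^ S (S m)) by (apply Rmult_le_compat_l; auto).
      lra. }
    assert (/ y^2 <= 2 * (y^2 / (1 + y^4))).
    { replace (2 * (y ^ 2 / (1 + y ^ 4))) with (/ y^2 * (2 * y^4 / (1 + y^4))) by (field; split; nra).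
      rewrite <- (Rmult_1_r (/ y^2)) at 1. apply Rmult_le_compat_l; [left; apply Rinv_0_lt_compat; nra|].
      apply Rle_div_r; [lra|]. assert (1 <= y^4) by (apply pow_R1_Rle; lra). lra. }
    lra.
Qed.

Fixpoint sumabs (L : list term) : R :=
  match L with nil => 0 | (c, a, n) :: L' => Rabs c + sumabs L' end.
Lemma sumabs_nn L : 0 <= sumabs L.
Proof. induction L as [|[[c a] n] L IH]; simpl; [lra|]. pose proof (Rabs_pos c); lra. Qed.

Lemma good_bd i L y : good i L -> 0 < y ->
  Rabs (y ^ i * evalL L y) <= sumabs L * (2 * (y ^ 2 / (1 + y ^ 4))).
Proof.
  intros HL Hy. induction HL as [|[[c a] n] L Ht HL IH]; cbn [evalL sumabs].
  - rewrite Rmult_0_r, Rabs_R0. lra.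
  - rewrite Rmult_plus_distr_l. eapply Rle_trans; [apply Rabs_triang|].
    rewrite Rmult_plus_distr_r. apply Rplus_le_compat; auto.
    simpl in Ht. pose proof (pos1 y) as Hp.
    assert (Hq : 0 < (1 + y^2)^n) by (apply pow_lt; lra).
    destruct Ht as [Hc|[H1 H2]].
    + subst. replace (y ^ i * (0 * y ^ a / (1 + y ^ 2) ^ n)) with 0 by (unfold Rdiv; ring).
      rewrite Rabs_R0. rewrite Rmult_0_l. lra.
    + replace (y ^ i * (c * y ^ a / (1 + y ^ 2) ^ n)) with (c * (y ^ (a + i) / (1 + y ^ 2) ^ n))
        by (rewrite pow_add; unfold Rdiv; ring).
      rewrite Rabs_mult. rewrite (Rabs_right (y ^ (a + i) / (1 + y ^ 2) ^ n)).
      2:{ apply Rle_ge. apply Rle_mult_inv_pos; [apply pow_le; lra | lra]. }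
      apply Rmult_le_compat_l; [apply Rabs_pos|]. apply term_bd; auto; lia.
Qed.

Lemma D_abs y y' : 0 < y' -> y' < y -> Rabs (Dfun y y') <= 24.
Proof.
  intros H1 H2. pose proof (D_bound y y' H1 H2) as H.
  assert (E1 : 0 <= (y - y') / y <= 1).
  { split; [apply Rle_mult_inv_pos; lra | apply Rle_div_l; lra]. }
  assert (E2 : 0 <= Rmin (y ^ 2 / jb y ^ 2) (/ jb y' ^ 2) <= 1).
  { pose proof (jb_ge1 y'). pose proof (jb_ge1 y). split.
    - apply Rmin_glb; [apply Rle_mult_inv_pos; [nra | apply pow_lt; lra] | left; apply Rinv_0_lt_compat; apply pow_lt; lra].
    - eapply Rle_trans; [apply Rmin_r|]. rewrite <- Rinv_1. apply Rinv_le_contravar; [lra|]. nra. }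
  assert ((y - y') / y * Rmin (y ^ 2 / jb y ^ 2) (/ jb y' ^ 2) <= 1) by nra. lra.
Qed.

Lemma h_nn y : 0 <= y ^ 2 / (1 + y ^ 4).
Proof. apply Rle_mult_inv_pos; [nra|]. pose proof (pow_le (y^2) 2 ltac:(nra)). 
  replace (y^4) with ((y^2)^2) by ring. lra. Qed.

Lemma good0_bd L y : good 0 L -> 0 < y -> Rabs (evalL L y) <= sumabs L * (2 * (y ^ 2 / (1 + y ^ 4))).
Proof. intros H Hy. pose proof (good_bd 0 L y H Hy). simpl in H0. rewrite Rmult_1_l in H0. exact H0. Qed.

Lemma k2_bound k : (2 <= k)%nat -> exists C, 0 < C /\ forall y y', 0 < y' -> y' < y ->
  Rabs (yDy_iter k Ifun y y') <= C * (y ^ 2 / (1 + y ^ 4) * wlog y y').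
Proof.
  intros Hk. destruct k as [|[|m]]; [lia|lia|].
  destruct (AB_good m) as [GA GB].
  set (SA := sumabs (fst (AB (S (S m))))). set (SB := sumabs (snd (AB (S (S m))))).
  pose proof (sumabs_nn (fst (AB (S (S m))))). pose proof (sumabs_nn (snd (AB (S (S m))))).
  exists (18 * SA + 48 * SB + 1). split; [unfold SA, SB in *; lra|].
  intros y y' H1 H2. rewrite rep by lra.
  pose proof (good0_bd _ y GA ltac:(lra)) as BA. pose proof (good0_bd _ y GB ltac:(lra)) as BB.
  fold SA in BA. fold SB in BB.
  pose proof (I_bound y y' H1 H2) as BI. pose proof (D_abs y y' H1 H2) as BD.
  pose proof (wlog_ge1 y y') as Wg. pose proof (h_nn y) as Hh.
  set (h := y ^ 2 / (1 + y ^ 4)) in *. set (w := wlog y y') in *.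
  eapply Rle_trans; [apply Rabs_triang|]. rewrite !Rabs_mult.
  assert (Rabs (evalL (fst (AB (S (S m)))) y) * Rabs (Ifun y y') <= (SA * (2 * h)) * (9 * w)).
  { apply Rmult_le_compat; auto; apply Rabs_pos. }
  assert (Rabs (evalL (snd (AB (S (S m)))) y) * Rabs (Dfun y y') <= (SB * (2 * h)) * (24 * w)).
  { apply Rmult_le_compat; auto; try apply Rabs_pos. lra. }
  assert (0 <= h * w) by nra.
  nra.
Qed.

Fixpoint Csum (A : list term) (l : nat) : R :=
  match l with
  | O => 2 * sumabs (iterD 0 A)
  | S l' => Csum A l' + 2 * sumabs (iterD (S l') A)
  end.
Lemma Csum_nn A l : 0 <= Csum A l.
Proof. induction l as [|l IH]; cbn [Csum].
  - pose proof (sumabs_nn (iterD 0 A)); lra.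
  - pose proof (sumabs_nn (iterD (S l) A)); lra. Qed.
Lemma Csum_ge A l j : (j <= l)%nat -> 2 * sumabs (iterD j A) <= Csum A l.
Proof.
  induction l; intros Hj.
  - assert (j = 0%nat) by lia. subst. cbn [Csum]. lra.
  - destruct (Nat.eq_dec j (S l)) as [E|E].
    + subst. cbn [Csum]. pose proof (Csum_nn A l). lra.
    + cbn [Csum]. pose proof (sumabs_nn (iterD (S l) A)). assert (j <= l)%nat by lia. specialize (IHl H0). lra.
Qed.
Lemma good_iter j A : good 0 A -> good j (iterD j A).
Proof. intros H. induction j; [exact H|]. apply good_deriv. exact IHj. Qed.

Lemma Ik_part k : (2 <= k)%nat -> exists Ik : R -> R,
        (forall y, 0 < y -> filterlim (fun y' => yDy_iter k Ifun y y') (at_left y) (locally (Ik y))) /\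
        (forall l : nat, exists C, 0 < C /\ forall y, 0 < y -> forall j : nat, (j <= l)%nat ->
            ex_derive_n Ik j y /\
            Rabs (y ^ j * Derive_n Ik j y) <= C * (y ^ 2 / (1 + y ^ 4))).
Proof.
  intros Hk. destruct k as [|[|m]]; [lia|lia|].
  destruct (AB_good m) as [GA GB].
  set (A := fst (AB (S (S m)))). set (B := snd (AB (S (S m)))).
  exists (evalL A). split.
  - intros y Hy.
    assert (Hc : continuous (fun y' => evalL A y * Ifun y y' + evalL B y * Dfun y y') y).
    { apply exd_cont. unfold Ifun, Dfun, fF, sS. pose proof (pos1 y). auto_derive. repeat split; try nra. }
    unfold continuous in Hc. rewrite Ifun_diag, Dfun_diag in Hc.
    replace (evalL A y * 1 + evalL B y * 0) with (evalL A y) in Hc by ring.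
    intros P HP. destruct (Hc P HP) as [e He]. exists e. intros t Ht _.
    specialize (He t Ht). simpl in He. unfold A, B in He. rewrite <- rep in He by exact Hy. exact He.
  - intros l. exists (Csum A l + 1). split; [pose proof (Csum_nn A l); lra|].
    intros y Hy j Hj. split; [apply ex_derive_n_evalL|].
    rewrite Derive_n_evalL.
    pose proof (good_bd j (iterD j A) y (good_iter j A GA) Hy).
    pose proof (Csum_ge A l j Hj). pose proof (h_nn y). pose proof (sumabs_nn (iterD j A)).
    nra.
Qed.

Theorem proposition3p4 :
  exists I : R -> R -> R,
    smooth_on (fun y y' => 0 < y' /\ y' < y) I /\
    outgoing_Green_LQ (G_L I) /\
    outgoing_Green_iLQ G_iL /\
    (exists C, 0 < C /\ forall y y', 0 < y' -> y' < y ->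
        Rabs (I y y') <= C * wlog y y') /\
    (exists C, 0 < C /\ forall y y', 0 < y' -> y' < y ->
        Rabs (yDy I y y') <=
          C * ((y - y') / y * Rmin (y ^ 2 / (jb y) ^ 2) (/ (jb y') ^ 2))) /\
    (forall k : nat, (2 <= k)%nat -> exists C, 0 < C /\ forall y y', 0 < y' -> y' < y ->
        Rabs (yDy_iter k I y y') <= C * (y ^ 2 / (1 + y ^ 4) * wlog y y')) /\
    (forall y0, 0 < y0 -> forall eps, 0 < eps -> exists delta, 0 < delta /\
        forall y y', 0 < y' -> y' < y -> Rabs (y - y0) < delta -> Rabs (y' - y0) < delta ->
          Rabs (I y y' - 1) < eps) /\
    (forall y0, 0 < y0 -> forall eps, 0 < eps -> exists delta, 0 < delta /\
        forall y y', 0 < y' -> y' < y -> Rabs (y - y0) < delta -> Rabs (y' - y0) < delta ->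
          Rabs (yDy I y y') < eps) /\
    (forall k : nat, (2 <= k)%nat -> exists Ik : R -> R,
        (forall y, 0 < y -> filterlim (fun y' => yDy_iter k I y y') (at_left y) (locally (Ik y))) /\
        (forall l : nat, exists C, 0 < C /\ forall y, 0 < y -> forall j : nat, (j <= l)%nat ->
            ex_derive_n Ik j y /\
            Rabs (y ^ j * Derive_n Ik j y) <= C * (y ^ 2 / (1 + y ^ 4)))).
Proof.
  exists Ifun. split; [|split; [|split; [|split; [|split; [|split; [|split; [|split]]]]]]].
  - intros k. apply nice_Ck; [apply Ifun_nice|]. intros x y [H1 H2]. split; lra.
  - apply green_LQ.
  - apply green_iLQ.
  - exists 9. split; [lra|]. apply I_bound.
  - exists 24. split; [lra|]. intros y y' H1 H2. rewrite yDy_I by lra. apply D_bound; auto.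
  - apply k2_bound.
  - apply lim_I.
  - apply lim_D.
  - apply Ik_part.
Qed.
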